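(* Let $\mathcal{C}=\{C_1,\ldots,C_r\}$ be a partition of $C$. Suppose that the sub-vectors $\mathbf{T}^{C_1},\ldots,\mathbf{T}^{C_r}$ are mutually independent, where $\mathbf{T}^{C_j}=(T_i)_{i\in C_j}$, and that each $\mathbf{T}^{C_j}$ is exchangeable. Then $q$ is $\mathcal{C}$-decomposable.
   Context: Consider components $C=[n]$ with random lifetimes $T_1,\ldots,T_n$ whose joint distribution has no ties. The relative quality function is $q(A)=\Pr(\max_{i\notin A}T_i<\min_{i\in A}T_i)$, with $q(\varnothing)=q([n])=1$. For a partition $\mathcal{C}=\{C_1,\ldots,C_r\}$ of $C$ into nonempty blocks, write $n_j=|C_j|$, $A_j=A\cap C_j$, and $q^{C_j}(A)=\Pr(\max_{i\in C_j\setminus A}T_i<\min_{i\in A}T_i)$ for $A\subseteq C_j$. A function $c\colon 2^C\to\mathbb{R}$ is $\mathcal{C}$-symmetric if $c(A)$ depends only on $(|A_1|,\ldots,|A_r|)$. The function $q$ is $\mathcal{C}$-decomposable if $q(A)=c(A)\prod_{j=1}^r q^{C_j}(A_j)$ for all $A\subseteq C$, for some $\mathcal{C}$-symmetric $c$. *)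

(* Defs.v *)
From HB Require Import structures.
From mathcomp Require Import all_boot all_order all_algebra all_fingroup.
From mathcomp Require Import all_classical all_reals all_analysis.
Set Implicit Arguments. Unset Strict Implicit. Unset Printing Implicit Defensive.
Import Order.TTheory GRing.Theory Num.Theory.
Local Open Scope classical_set_scope.
Local Open Scope ring_scope.

Section Defs.
Variables (R : realType) (d : measure_display) (T : measurableType d)
  (P : probability T R) (n : nat) (X : 'I_n -> {RV P >-> R}).

Definition no_ties : Prop :=
  forall i j : 'I_n, i != j -> P [set w | X i w = X j w] = 0%E.

Definition sigma_subvector (S : {set 'I_n}) : set (set T) :=
  <<s [set E | exists i B, [/\ i \in S, measurable B & E = X i @^-1` B]] >>.

Definition subvectors_independent (Cs : {set {set 'I_n}}) : Prop :=
  forall E : {set 'I_n} -> set T,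
    (forall Cj, Cj \in Cs -> sigma_subvector Cj (E Cj)) ->
    P [set w | forall Cj, Cj \in Cs -> E Cj w] =
    (\prod_(Cj in Cs) P (E Cj))%E.

(* exchangeability of T^S: for every permutation s of the indices in S,
   (T_{s i})_{i in S} and (T_i)_{i in S} have the same joint law
   (equality on all measurable rectangles of R^S). *)
Definition exchangeable_subvector (S : {set 'I_n}) : Prop :=
  forall s : {perm 'I_n}, perm_on S s ->
  forall B : 'I_n -> set R, (forall i, measurable (B i)) ->
    P [set w | forall i, i \in S -> B i (X (s i) w)] =
    P [set w | forall i, i \in S -> B i (X i w)].

(* relative quality function q(A) = Pr(max_{i notin A} T_i < min_{i in A} T_i),
   with max over empty = -oo and min over empty = +oo *)
Definition q (A : {set 'I_n}) : R :=
  fine (P [set w | forall i j, i \notin A -> j \in A -> X i w < X j w]).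

(* q^{S}(A) = Pr(max_{i in S \ A} T_i < min_{i in A} T_i), for A subset of S *)
Definition qsub (S A : {set 'I_n}) : R :=
  fine (P [set w | forall i j, i \in S -> i \notin A -> j \in A -> X i w < X j w]).

End Defs.

Definition part_symmetric (n : nat) (Cs : {set {set 'I_n}}) (R : Type)
    (c : {set 'I_n} -> R) : Prop :=
  forall A B : {set 'I_n},
    (forall Cj, Cj \in Cs -> #|A :&: Cj| = #|B :&: Cj|) -> c A = c B.

Definition decomposable (R : realType) (d : measure_display)
    (T : measurableType d) (P : probability T R) (n : nat)
    (X : 'I_n -> {RV P >-> R}) (Cs : {set {set 'I_n}}) : Prop :=
  exists c : {set 'I_n} -> R, part_symmetric Cs c /\
    forall A : {set 'I_n},
      q X A = c A * \prod_(Cj in Cs) qsub X Cj (A :&: Cj).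

(* Main.v *)
Require Import Defs.
From HB Require Import structures.
From mathcomp Require Import all_boot all_order all_algebra all_fingroup.
From mathcomp Require Import all_classical all_reals all_analysis.
Set Implicit Arguments. Unset Strict Implicit. Unset Printing Implicit Defensive.
Import Order.TTheory GRing.Theory Num.Theory.
Local Open Scope classical_set_scope.
Local Open Scope ring_scope.

Definition V (R : realType) (n : nat) := 'I_n -> R.
HB.instance Definition _ R n := gen_eqMixin (V R n).
HB.instance Definition _ R n := gen_choiceMixin (V R n).
HB.instance Definition _ (R : realType) n := isPointed.Build (V R n) (fun _ => 0%R).

Section Main.
Variables (R : realType) (d : measure_display) (T : measurableType d)
  (P : probability T R) (n : nat) (X : 'I_n -> {RV P >-> R})
  (Cs : {set {set 'I_n}}).
Hypothesis Hpart : finset.partition Cs [set: 'I_n].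
Hypothesis Hind : subvectors_independent X Cs.
Hypothesis Hexch : forall Cj, Cj \in Cs -> exchangeable_subvector X Cj.

Definition blockp (s : {perm 'I_n}) :=
  forall Cj, Cj \in Cs -> forall i, (s i \in Cj) = (i \in Cj).

Lemma in_block i : exists2 Cj, Cj \in Cs & i \in Cj.
Proof.
move: Hpart => /and3P[/eqP cov _ _].
have : i \in finset.cover Cs by rewrite cov inE.
by move/bigcupP => [Cj H1 H2]; exists Cj.
Qed.

Lemma same_block Cj Ck i : Cj \in Cs -> Ck \in Cs -> i \in Cj -> i \in Ck -> Cj = Ck.
Proof.
move=> hj hk ij ik.
by rewrite -(def_pblock (partition_trivIset Hpart) hj ij) (def_pblock (partition_trivIset Hpart) hk ik).
Qed.

Lemma blockp1 : blockp 1%g.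
Proof. by move=> Cj _ i; rewrite perm1. Qed.

Lemma sub_meas (S : {set 'I_n}) (s : 'I_n -> 'I_n) (B : 'I_n -> set R) :
  (forall i, measurable (B i)) ->
  (forall i, i \in S -> s i \in S) ->
  sigma_subvector X S [set w | forall i, i \in S -> B i (X (s i) w)].
Proof.
move=> mB hS.
pose GT := g_sigma_algebraType
  [set E | exists i B, [/\ i \in S, measurable B & E = X i @^-1` B]].
have -> : [set w | forall i, i \in S -> B i (X (s i) w)] =
   \bigcap_(i in [set i | i \in S]) (X (s i) @^-1` B i).
  by apply/funext => w; apply/propext; split => H i; apply: H.
apply: (@fin_bigcap_measurable _ GT) => //.
move=> i iS; apply: sub_sigma_algebra; exists (s i), (B i); split => //.
exact: hS.
Qed.

Lemma rect_meas (S : {set 'I_n}) (s : 'I_n -> 'I_n) (B : 'I_n -> set R) :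
  (forall i, measurable (B i)) ->
  measurable [set w | forall i, i \in S -> B i (X (s i) w)].
Proof.
move=> mB.
have -> : [set w | forall i, i \in S -> B i (X (s i) w)] =
   \bigcap_(i in [set i | i \in S]) (X (s i) @^-1` B i).
  by apply/funext => w; apply/propext; split => H i; apply: H.
apply: fin_bigcap_measurable => //.
by move=> i _; apply: measurable_funPTI.
Qed.

Lemma rect_inv (s : {perm 'I_n}) : blockp s ->
  forall B : 'I_n -> set R, (forall i, measurable (B i)) ->
  P [set w | forall i, B i (X (s i) w)] = P [set w | forall i, B i (X i w)].
Proof.
move=> hs B mB.
have key : forall t : {perm 'I_n}, [set w | forall i, B i (X (t i) w)] =
   [set w | forall Cj, Cj \in Cs ->
      (fun Cj => [set w | forall i, i \in Cj -> B i (X (t i) w)]) Cj w].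
  move=> t; apply/funext => w; apply/propext; split => /= H.
    by move=> Cj _ i _; apply: H.
  by move=> i; have [Cj h1 h2] := in_block i; exact: (H Cj h1 i h2).
have -> : [set w | forall i, B i (X i w)] = [set w | forall i, B i (X ((1%g : {perm 'I_n}) i) w)].
  by apply/funext => w; apply/propext; split => H i; [rewrite perm1|move: (H i); rewrite perm1].
rewrite !key !Hind; last 2 first.
- by move=> Cj hj; apply: sub_meas => // i; rewrite perm1.
- by move=> Cj hj; apply: sub_meas => // i; rewrite (hs Cj hj).
apply: eq_bigr => Cj hj.
pose f i := if i \in Cj then s i else i.
have finj : injective f.
  move=> i k; rewrite /f; case: ifP => hi; case: ifP => hk.
  - exact: perm_inj.
  - by move=> e; move: hk; rewrite -e (hs Cj hj) hi.
  - by move=> e; move: hi; rewrite e (hs Cj hj) hk.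
  - by [].
pose sj := perm finj.
have son : perm_on Cj sj.
  rewrite /perm_on; apply/fintype.subsetP => i; rewrite inE permE /f; case: ifP => // _; by rewrite eqxx.
have := Hexch hj son mB.
have -> : [set w | forall i, i \in Cj -> B i (X (sj i) w)] =
          [set w | forall i, i \in Cj -> B i (X (s i) w)].
  apply/funext => w; apply/propext; split => H i hi; have := H i hi;
    by rewrite permE /f hi.
move=> ->; apply: f_equal; apply/funext => w; apply/propext.
by split => H i hi; [rewrite perm1; exact: H|move: (H i hi); rewrite perm1].
Qed.


Definition rect (B : 'I_n -> set R) : set (V R n) := [set f | forall i, B i (f i)].
Definition Rects : set (set (V R n)) :=
  [set rect B | B in [set B | forall i, measurable (B i)]].
Local Notation U := (g_sigma_algebraType Rects).

Definition Y (s : {perm 'I_n}) (w : T) : U := fun i => X (s i) w.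

Lemma Y_meas s : measurable_fun setT (Y s).
Proof.
have := @measurability _ _ _ U setT (Y s) Rects erefl.
apply =>  _ [_ [B mB <-] <-].
have -> : setT `&` Y s @^-1` rect B = [set w | forall i, i \in [set: 'I_n]%SET -> B i (X (s i) w)].
  apply/funext => w; apply/propext; rewrite setTI; split => /= H i; [move=> _|]; first exact: H.
  by apply: H; rewrite inE.
by apply: rect_meas; exact: mB.
Qed.

Lemma law_inv s : blockp s -> forall F : set U, measurable F ->
  P (Y s @^-1` F) = P (Y 1%g @^-1` F).
Proof.
move=> hs F mF.
have := @measure_unique _ R U Rects (fun _ => setT) erefl _ _ _
  (pushforward P (Y s)) (pushforward P (Y 1%g)) _ _ F mF.
apply.
- move=> _ _ [B1 mB1 <-] [B2 mB2 <-].
  exists (fun i => B1 i `&` B2 i).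
    by move=> i; apply: measurableI.
  apply/funext => f; apply/propext; split => /=.
    by move=> H; split => i; have [] := H i.
  by move=> [H1 H2] i; split.
- move=> _; exists (fun _ => setT) => //.
  by apply/funext => f; apply/propext; split.
- by apply/funext => f; apply/propext; split => // _; exists 0%N.
- exact: Y_meas.
- exact: Y_meas.
- move=> h0 h1 _ [B mB <-]; rewrite /pushforward.
  change (P [set w | forall i, B i (X (s i) w)] =
          P [set w | forall i, B i (X ((1%g : {perm 'I_n}) i) w)]).
  rewrite rect_inv //.
  apply: f_equal; apply/funext => w; apply/propext.
  by split => H i; [rewrite perm1|move: (H i); rewrite perm1].
- move=> h0 _; change (P (Y s @^-1` setT) < +oo)%E; rewrite preimage_setT.
  by apply: (le_lt_trans (probability_le1 _ _)) => //; rewrite ltry.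
Qed.

Definition ev (S A : {set 'I_n}) : set T :=
  [set w | forall i j, i \in S -> i \notin A -> j \in A -> X i w < X j w].
Definition evU (S A : {set 'I_n}) : set U :=
  [set f | forall i j, i \in S -> i \notin A -> j \in A -> f i < f j].

Lemma lt_meas (i j : 'I_n) : measurable [set f : U | f i < f j].
Proof.
pose B (q : rat) (k : 'I_n) : set R := (if k == i then [set` `]-oo, (ratr q : R)[ ] else setT) `&`
   (if k == j then [set` `]ratr q, +oo[ ] else setT).
have -> : [set f : U | f i < f j] = \bigcup_q rect (B q).
  apply/funext => f; apply/propext; split => /=.
    move=> fij; have [q] := rat_in_itvoo fij; rewrite in_itv /= => /andP[h1 h2].
    exists q => // k; rewrite /B; split.
      by case: eqP => // ->; rewrite /= in_itv /=.
    by case: eqP => // ->; rewrite /= in_itv /= andbT.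
  move=> [q _ H]; have [+ _] := H i; have [_ +] := H j.
  rewrite !eqxx /= !in_itv /= andbT => h1 h2.
  exact: lt_trans h2 h1.
apply: bigcupT_measurable_rat => q; apply: sub_sigma_algebra.
exists (B q) => // k; apply: measurableI.
  by case: eqP => _; [apply: measurable_itv|apply: measurableT].
by case: eqP => _; [apply: measurable_itv|apply: measurableT].
Qed.

Lemma evU_meas S A : measurable (evU S A).
Proof.
have -> : evU S A = \bigcap_(p in [set: 'I_n * 'I_n])
  (if (p.1 \in S) && (p.1 \notin A) && (p.2 \in A) then [set f : U | f p.1 < f p.2] else setT).
  apply/funext => f; apply/propext; split => /= H.
    move=> [i j] _ /=; case: ifP => //= /andP[/andP[h1 h2] h3]; exact: H.
  move=> i j h1 h2 h3; have := H (i, j) I; by rewrite /= h1 h2 h3.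
apply: fin_bigcap_measurable => // p _.
by case: ifP => _; [apply: lt_meas|apply: measurableT].
Qed.

Lemma ev_pre S A : ev S A = Y 1%g @^-1` evU S A.
Proof.
apply/funext => w; apply/propext; rewrite /ev /evU /Y /=.
by split => H i j h1 h2 h3; [rewrite !perm1; exact: H|move: (H i j h1 h2 h3); rewrite !perm1].
Qed.

Lemma ev_meas S A : measurable (ev S A).
Proof.
rewrite ev_pre -[X in measurable X]setTI; apply: Y_meas => //; exact: evU_meas.
Qed.

Lemma ev_inv s (S A S' A' : {set 'I_n}) : blockp s ->
  (forall i, (s i \in S') = (i \in S)) -> (forall i, (s i \in A') = (i \in A)) ->
  P (ev S' A') = P (ev S A).
Proof.
move=> hs hS hA.
rewrite [in RHS]ev_pre -(law_inv hs); last exact: evU_meas.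
apply: f_equal; apply/funext => w; apply/propext; rewrite /ev /evU /Y /=.
split => H.
  by move=> i j h1 h2 h3; apply: H; rewrite ?hS ?hA.
move=> k l h1 h2 h3.
have := H (s^-1%g k) (s^-1%g l); rewrite !permKV; apply.
- by rewrite -hS permKV.
- by rewrite -hA permKV.
- by rewrite -hA permKV.
Qed.

Lemma tperm_block a b Cj : Cj \in Cs -> a \in Cj -> b \in Cj -> blockp (tperm a b).
Proof.
move=> hj ha hb Ck hk i.
case: tpermP => [->|->|_ _] //.
  by apply/idP/idP => h; [have e := same_block hk hj h hb|have e := same_block hk hj h ha];
    rewrite e.
by apply/idP/idP => h; [have e := same_block hk hj h ha|have e := same_block hk hj h hb];
  rewrite e.
Qed.

Lemma tperm_mem (A : {set 'I_n}) a b : a \in A -> b \notin A ->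
  forall i, (tperm a b i \in (A :\ a) :|: [set b]) = (i \in A).
Proof.
move=> ha hb i.
have nab : a != b by apply: contraNneq hb => <-.
case: tpermP => [->|->|/eqP ia /eqP ib].
- by rewrite !inE eqxx orbT ha.
- by rewrite !inE eqxx (negPf nab) (negPf hb).
- by rewrite !inE ia (negPf ib) orbF.
Qed.

Lemma counts_eq (A B : {set 'I_n}) :
  (forall Cj, Cj \in Cs -> #|A :&: Cj| = #|B :&: Cj|) -> A :\: B = finset.set0 -> A = B.
Proof.
move=> hc e; apply/setP => i.
have [Cj hj ij] := in_block i.
have sub : A :&: Cj \subset B :&: Cj.
  apply/fintype.subsetP => x; rewrite !inE => /andP[xA xC]; rewrite xC andbT.
  apply: contraT => xB.
  have h : x \in A :\: B by rewrite inE xB xA.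
  by rewrite e inE in h.
have : A :&: Cj == B :&: Cj by rewrite eqEcard sub (hc Cj hj) leqnn.
move/eqP/setP/(_ i); rewrite !inE ij !andbT => ->.
done.
Qed.

Lemma sym_ind (F : {set 'I_n} -> R) :
  (forall (A : {set 'I_n}) a b Cj, Cj \in Cs -> a \in Cj -> b \in Cj -> a \in A -> b \notin A ->
     F ((A :\ a) :|: [set b]) = F A) ->
  forall A B, (forall Cj, Cj \in Cs -> #|A :&: Cj| = #|B :&: Cj|) -> F A = F B.
Proof.
move=> step A B.
suff main : forall k (A : {set 'I_n}), (#|A :\: B| <= k)%N ->
   (forall Cj, Cj \in Cs -> #|A :&: Cj| = #|B :&: Cj|) -> F A = F B.
  by apply: main (leqnn _).
elim=> [|k IH] A0 hk hc.
  by rewrite (counts_eq hc) //; apply/cards0_eq; move: hk; rewrite leqn0 => /eqP.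
case: (set_0Vmem (A0 :\: B)) => [e|[a ha]]; first by rewrite (counts_eq hc e).
move: (ha); rewrite inE => /andP[aB aA].
have [Cj hj aj] := in_block a.
case: (set_0Vmem ((B :&: Cj) :\: A0)) => [e'|[b hb]].
  exfalso.
  have sub : B :&: Cj \subset A0 :&: Cj.
    apply/fintype.subsetP => x xBC; rewrite inE; move: (xBC); rewrite inE => /andP[_ ->].
    rewrite andbT; apply: contraT => xA.
    have h : x \in (B :&: Cj) :\: A0 by rewrite inE xA xBC.
    by rewrite e' inE in h.
  have : B :&: Cj == A0 :&: Cj by rewrite eqEcard sub (hc Cj hj) leqnn.
  move/eqP/setP/(_ a); rewrite !inE aj aA !andbT => e2.
  by move: aB; rewrite e2.
move: hb; rewrite !inE => /andP[bA /andP[bB bj]].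
rewrite -(step A0 a b Cj hj aj bj aA bA).
apply: IH.
  have sub : ((A0 :\ a) :|: [set b]) :\: B \subset (A0 :\: B) :\ a.
    apply/fintype.subsetP => x; rewrite !inE => /andP[xB /orP[/andP[xa xA]|/eqP xb]].
      by rewrite xa xB xA.
    by move: xB; rewrite xb bB.
  have := subset_leq_card sub.
  move: hk; rewrite (cardsD1 a (A0 :\: B)) ha add1n ltnS.
  by move=> h1 h2; exact: leq_trans h2 h1.
move=> Ck hCk; rewrite -(hc Ck hCk).
have e : A0 :&: Ck = tperm a b @^-1: (((A0 :\ a) :|: [set b]) :&: Ck).
  apply/setP => i; rewrite finset.in_setI [in RHS]inE finset.in_setI tperm_mem //.
  by rewrite (tperm_block hj aj bj hCk).
by rewrite e card_preimset //; exact: perm_inj.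
Qed.

Lemma qE A : q X A = fine (P (ev [set: 'I_n]%SET A)).
Proof.
rewrite /q; congr (fine (P _)); apply/funext => w; apply/propext.
by split => H i j; [move=> _; exact: H|apply: H; rewrite inE].
Qed.

Lemma qsubE S A : qsub X S A = fine (P (ev S A)).
Proof. by []. Qed.

Lemma decomp : decomposable X Cs.
Proof.
pose F2 A := \prod_(Cj in Cs) qsub X Cj (A :&: Cj).
have s1 : forall A B, (forall Cj, Cj \in Cs -> #|A :&: Cj| = #|B :&: Cj|) -> q X A = q X B.
  apply: sym_ind => A a b Cj hj aj bj aA bA.
  rewrite !qE (@ev_inv (tperm a b) [set: 'I_n]%SET A) //.
  - exact: tperm_block hj aj bj.
  - by move=> i; rewrite !inE.
  - exact: tperm_mem.
have s2 : forall A B, (forall Cj, Cj \in Cs -> #|A :&: Cj| = #|B :&: Cj|) -> F2 A = F2 B.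
  apply: sym_ind => A a b Cj hj aj bj aA bA.
  apply: eq_bigr => Ck hk; rewrite !qsubE.
  rewrite (@ev_inv (tperm a b) Ck (A :&: Ck)) //.
  - exact: tperm_block hj aj bj.
  - exact: (tperm_block hj aj bj hk).
  - by move=> i; rewrite !finset.in_setI tperm_mem // (tperm_block hj aj bj hk).
exists (fun A => q X A / F2 A); split.
  by move=> A B h; rewrite (s1 A B h) (s2 A B h).
move=> A; rewrite -/(F2 A).
have [h|h] := eqVneq (F2 A) 0; last by rewrite divfK.
rewrite h mulr0.
move: h; rewrite /F2 => /eqP /prodf_eq0 [Ck hk /eqP h0].
apply/eqP; rewrite eq_le; apply/andP; split; last first.
  by rewrite qE; apply: fine_ge0; apply: measure_ge0.
rewrite -h0 qE qsubE; apply: fine_le.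
- exact: fin_num_measure (ev_meas _ _).
- exact: fin_num_measure (ev_meas _ _).
apply: le_measure; rewrite ?inE; try exact: ev_meas.
move=> w H i j ik ia ja; apply: H; rewrite ?inE.
- by [].
- by move: ia; rewrite !inE ik andbT.
- by move: ja; rewrite !inE => /andP[].
Qed.

End Main.

Theorem corollary10 (R : realType) (d : measure_display) (T : measurableType d)
  (P : probability T R) (n : nat) (X : 'I_n -> {RV P >-> R})
  (Cs : {set {set 'I_n}}) :
  no_ties X ->
  finset.partition Cs [set: 'I_n] ->
  subvectors_independent X Cs ->
  (forall Cj, Cj \in Cs -> exchangeable_subvector X Cj) ->
  decomposable X Cs.
Proof. by move=> _ hp hi he; apply: decomp. Qed.
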